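(* For every $\alpha\ge 1$ there exists a chore allocation instance (with three agents and monotone cost functions) that admits a maximin share fair allocation but admits no $\alpha$-EFX allocation. That is, the existence of an MMS allocation does not imply the existence of an $\alpha$-EFX allocation for any $\alpha \ge 1$.
   Context: A chore allocation instance consists of a set $N=\{1,\dots,n\}$ of agents, a finite set $M$ of chores, and for each agent $i$ a normalized ($c_i(\emptyset)=0$), monotone ($c_i(S\cup\{e\})\ge c_i(S)$) cost function $c_i:2^M\to\mathbb{R}_{\ge0}$. An allocation is a partition $X=(X_1,\dots,X_n)$ of $M$ with agent $i$ receiving $X_i$. For $\alpha\ge1$, $X$ is $\alpha$-EFX if for all agents $i,j$ and every $e\in X_i$, $c_i(X_i\setminus\{e\})\le\alpha\cdot c_i(X_j)$. The maximin share of agent $i$ is $\mu_i^n(M)=\min_{Y\in\Pi_n(M)}\max_{k\in[n]} c_i(Y_k)$, where $\Pi_n(M)$ is the set of partitions of $M$ into $n$ bundles; an allocation $X$ is maximin share fair (MMS) if $c_i(X_i)\le \mu_i^n(M)$ for every agent $i$. *)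

(* Defs.v *)
From HB Require Import structures.
From mathcomp Require Import all_boot all_order all_algebra.
From mathcomp Require Import reals.
Set Implicit Arguments. Unset Strict Implicit. Unset Printing Implicit Defensive.
Import Order.TTheory GRing.Theory Num.Theory.
Local Open Scope ring_scope.

Section ChoreDefs.
Variables (R : realType) (M : finType) (n : nat).

Definition valid_costs (c : 'I_n -> {set M} -> R) : Prop :=
  forall i : 'I_n,
    [/\ c i set0 = 0,
        (forall S : {set M}, 0 <= c i S) &
        (forall (S : {set M}) (e : M), c i S <= c i (e |: S))].

Definition is_partition (X : 'I_n -> {set M}) : Prop :=
  (forall i j : 'I_n, i != j -> [disjoint X i & X j]) /\
  \bigcup_(i < n) X i = [set: M].

Definition alpha_EFX (alpha : R) (c : 'I_n -> {set M} -> R)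
    (X : 'I_n -> {set M}) : Prop :=
  forall (i j : 'I_n) (e : M), e \in X i -> c i (X i :\ e) <= alpha * c i (X j).

(* c_i(S) <= mu_i^n(M) = min over partitions Y of max_k c_i(Y_k),
   written as "c_i(S) <= max_k c_i(Y_k) for every partition Y"
   (the max is taken with initial value 0, harmless since costs are >= 0). *)
Definition le_mms (c : 'I_n -> {set M} -> R) (i : 'I_n) (v : R) : Prop :=
  forall Y : 'I_n -> {set M}, is_partition Y ->
    v <= \big[Num.max/0]_(k < n) c i (Y k).

Definition is_MMS (c : 'I_n -> {set M} -> R) (X : 'I_n -> {set M}) : Prop :=
  forall i : 'I_n, le_mms c i (c i (X i)).

End ChoreDefs.

(* Main.v *)
Require Import Defs.
From mathcomp Require Import all_boot all_order all_algebra.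
From mathcomp Require Import reals.
Import Order.TTheory GRing.Theory Num.Theory.
Set Implicit Arguments. Unset Strict Implicit. Unset Printing Implicit Defensive.

Definition tab0 := [:: 0; 2; 0; 3; 2; 3; 3; 3; 0; 3; 3; 3; 3; 3; 3; 3; 1; 2; 1; 3; 2; 3; 3; 3; 1; 3; 3; 3; 3; 3; 3; 3; 0; 2; 0; 3; 2; 3; 3; 3; 0; 3; 3; 3; 3; 3; 3; 3; 3; 3; 3; 3; 3; 3; 3; 3; 3; 3; 3; 3; 3; 3; 3; 3].
Definition tab1 := [:: 0; 2; 0; 2; 2; 3; 2; 3; 0; 3; 0; 3; 2; 3; 3; 3; 1; 2; 3; 3; 2; 3; 3; 3; 1; 3; 3; 3; 3; 3; 3; 3; 0; 3; 0; 3; 3; 3; 3; 3; 3; 3; 3; 3; 3; 3; 3; 3; 1; 3; 3; 3; 3; 3; 3; 3; 3; 3; 3; 3; 3; 3; 3; 3].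
Definition tab2 := [:: 0; 2; 0; 2; 2; 3; 2; 3; 0; 3; 0; 3; 2; 3; 3; 3; 1; 3; 1; 3; 3; 3; 3; 3; 3; 3; 3; 3; 3; 3; 3; 3; 0; 2; 3; 3; 2; 3; 3; 3; 0; 3; 3; 3; 3; 3; 3; 3; 1; 3; 3; 3; 3; 3; 3; 3; 3; 3; 3; 3; 3; 3; 3; 3].
Definition tabn (i : nat) := nth [::] [:: tab0; tab1; tab2] i.

Definition cb (b0 b1 b2 b3 b4 b5 : bool) : nat :=
  b0 + 2 * b1 + 4 * b2 + 8 * b3 + 16 * b4 + 32 * b5.

Definition cm (a0 a1 a2 a3 a4 a5 k : nat) :=
  cb (a0 == k) (a1 == k) (a2 == k) (a3 == k) (a4 == k) (a5 == k).
Definition cmd (a0 a1 a2 a3 a4 a5 k e : nat) :=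
  cb ((0 != e) && (a0 == k)) ((1 != e) && (a1 == k)) ((2 != e) && (a2 == k))
     ((3 != e) && (a3 == k)) ((4 != e) && (a4 == k)) ((5 != e) && (a5 == k)).

Definition bad (a0 a1 a2 a3 a4 a5 : nat) : bool :=
  has (fun i => has (fun e => (nth 0 [:: a0; a1; a2; a3; a4; a5] e == i) &&
     has (fun j => nth 0 (tabn i) (cm a0 a1 a2 a3 a4 a5 j) < nth 0 (tabn i) (cmd a0 a1 a2 a3 a4 a5 i e))
       (iota 0 3)) (iota 0 6)) (iota 0 3).

Definition mmsok (a0 a1 a2 a3 a4 a5 : nat) : bool :=
  has (fun k => nth 0 tab0 63 <= nth 0 tab0 (cm a0 a1 a2 a3 a4 a5 k)) (iota 0 3).

Definition all6 (P : nat -> nat -> nat -> nat -> nat -> nat -> bool) :=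
  all (fun a0 => all (fun a1 => all (fun a2 => all (fun a3 => all (fun a4 => all (fun a5 =>
    P a0 a1 a2 a3 a4 a5) (iota 0 3)) (iota 0 3)) (iota 0 3)) (iota 0 3)) (iota 0 3)) (iota 0 3).

Lemma all_bad : all6 bad. Proof. by vm_compute. Qed.
Lemma all_mms : all6 mmsok. Proof. by vm_compute. Qed.

Definition bs := [:: false; true].
Definition monochk (i : nat) : bool :=
  all (fun b0 => all (fun c0 => all (fun b1 => all (fun c1 =>
  all (fun b2 => all (fun c2 => all (fun b3 => all (fun c3 =>
  all (fun b4 => all (fun c4 => all (fun b5 => all (fun c5 =>
    [&& b0 ==> c0, b1 ==> c1, b2 ==> c2, b3 ==> c3, b4 ==> c4 & b5 ==> c5] ==>
    (nth 0 (tabn i) (cb b0 b1 b2 b3 b4 b5) <= nth 0 (tabn i) (cb c0 c1 c2 c3 c4 c5)))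
  bs) bs) bs) bs) bs) bs) bs) bs) bs) bs) bs) bs.

Lemma all_mono i : i < 3 -> monochk i.
Proof. by case: i => [|[|[|//]]] _; vm_compute. Qed.

Lemma memb (b : bool) : b \in bs.
Proof. by case: b. Qed.


Local Open Scope ring_scope.

Definition o0 : 'I_6 := @Ordinal 6 0 erefl.
Definition o1 : 'I_6 := @Ordinal 6 1 erefl.
Definition o2 : 'I_6 := @Ordinal 6 2 erefl.
Definition o3 : 'I_6 := @Ordinal 6 3 erefl.
Definition o4 : 'I_6 := @Ordinal 6 4 erefl.
Definition o5 : 'I_6 := @Ordinal 6 5 erefl.
Definition p0 : 'I_3 := @Ordinal 3 0 erefl.
Definition p1 : 'I_3 := @Ordinal 3 1 erefl.
Definition p2 : 'I_3 := @Ordinal 3 2 erefl.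

Definition code (S : {set 'I_6}) : nat :=
  cb (o0 \in S) (o1 \in S) (o2 \in S) (o3 \in S) (o4 \in S) (o5 \in S).
Definition lev (i : 'I_3) (S : {set 'I_6}) : nat := nth 0%N (tabn i) (code S).

Lemma code_part (g : 'I_6 -> 'I_3) k :
  code [set y | g y == k] = cm (g o0) (g o1) (g o2) (g o3) (g o4) (g o5) k.
Proof. by rewrite /code !inE. Qed.

Lemma code_partD (g : 'I_6 -> 'I_3) k e :
  code ([set y | g y == k] :\ e) = cmd (g o0) (g o1) (g o2) (g o3) (g o4) (g o5) k e.
Proof. by rewrite /code !inE. Qed.

Lemma mem3 (x : 'I_3) : (val x \in iota 0 3)%N.
Proof. by rewrite mem_iota ltn_ord. Qed.

Lemma bad_core (g : 'I_6 -> 'I_3) : exists (i j : 'I_3) (e : 'I_6),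
  (g e == i) && (lev i [set y | g y == j] < lev i ([set y | g y == i] :\ e))%N.
Proof.
have H : bad (g o0) (g o1) (g o2) (g o3) (g o4) (g o5).
  move: all_bad; rewrite /all6.
  move=> /allP /(_ _ (mem3 (g o0))) /allP /(_ _ (mem3 (g o1)))
         /allP /(_ _ (mem3 (g o2))) /allP /(_ _ (mem3 (g o3)))
         /allP /(_ _ (mem3 (g o4))) /allP /(_ _ (mem3 (g o5))).
  done.
move: H => /hasP [i0 Hi0 /hasP [e0 He0 /andP [Hei /hasP [j0 Hj0 Hlt]]]].
exists (nth p0 [:: p0; p1; p2] i0), (nth p0 [:: p0; p1; p2] j0),
  (nth o0 [:: o0; o1; o2; o3; o4; o5] e0).
rewrite /lev code_part code_partD.
move: Hi0 Hj0 He0 Hei Hlt; rewrite !mem_iota.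
case: i0 => [|[|[|//]]] _; case: j0 => [|[|[|//]]] _;
  case: e0 => [|[|[|[|[|[|//]]]]]] _ /= H1 H2; apply/andP; split; assumption.
Qed.

Lemma mms_core (g : 'I_6 -> 'I_3) : exists k : 'I_3,
  (lev p0 [set: 'I_6] <= lev p0 [set y | g y == k])%N.
Proof.
have H : mmsok (g o0) (g o1) (g o2) (g o3) (g o4) (g o5).
  move: all_mms; rewrite /all6.
  move=> /allP /(_ _ (mem3 (g o0))) /allP /(_ _ (mem3 (g o1)))
         /allP /(_ _ (mem3 (g o2))) /allP /(_ _ (mem3 (g o3)))
         /allP /(_ _ (mem3 (g o4))) /allP /(_ _ (mem3 (g o5))).
  done.
move: H => /hasP [k0 Hk0 Hle].
exists (nth p0 [:: p0; p1; p2] k0).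
rewrite /lev code_part /code !inE.
move: Hk0 Hle; rewrite !mem_iota.
by case: k0 => [|[|[|//]]] _ /=.
Qed.

Lemma lev0 i : lev i set0 = 0%N.
Proof. by rewrite /lev /code !inE; case: i => [[|[|[|//]]] ?]. Qed.

Lemma lev_mono i (S : {set 'I_6}) e : (lev i S <= lev i (e |: S))%N.
Proof.
move: (all_mono (ltn_ord i)); rewrite /monochk.
move=> /allP /(_ _ (memb (o0 \in S))) /allP /(_ _ (memb ((o0 == e) || (o0 \in S))))
       /allP /(_ _ (memb (o1 \in S))) /allP /(_ _ (memb ((o1 == e) || (o1 \in S))))
       /allP /(_ _ (memb (o2 \in S))) /allP /(_ _ (memb ((o2 == e) || (o2 \in S))))
       /allP /(_ _ (memb (o3 \in S))) /allP /(_ _ (memb ((o3 == e) || (o3 \in S))))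
       /allP /(_ _ (memb (o4 \in S))) /allP /(_ _ (memb ((o4 == e) || (o4 \in S))))
       /allP /(_ _ (memb (o5 \in S))) /allP /(_ _ (memb ((o5 == e) || (o5 \in S)))).
rewrite /lev /code !in_setU1 => /implyP; apply.
by case: (o0 \in S); case: (o1 \in S); case: (o2 \in S); case: (o3 \in S);
  case: (o4 \in S); case: (o5 \in S); rewrite ?orbT.
Qed.

Lemma part_g (X : 'I_3 -> {set 'I_6}) : is_partition X ->
  exists g : 'I_6 -> 'I_3, forall k, X k = [set y | g y == k].
Proof.
move=> [Hdis Hcov].
exists (fun y => odflt p0 [pick k | y \in X k]) => k.
apply/setP => y; rewrite inE.
case: pickP => [k' Hk'|H] /=.
  case: (eqVneq k' k) => [<-|Hne]; first by rewrite Hk'.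
  exact: (disjointFr (Hdis _ _ Hne) Hk').
have : y \in \bigcup_(i < 3) X i by rewrite Hcov inE.
by case/bigcupP => k' _; rewrite H.
Qed.

Section Real.
Variables (R : realType) (alpha : R).
Hypothesis ha : 1 <= alpha.

Definition vv (k : nat) : R := if k is k'.+1 then (2 * alpha) ^+ k' else 0.

Lemma a_gt0 : 0 < alpha.
Proof. exact: lt_le_trans ltr01 ha. Qed.

Lemma K_ge1 : 1 <= 2 * alpha.
Proof.
apply: (le_trans ha); rewrite ler_pMl ?a_gt0 //.
by rewrite (_ : 2 = 1 + 1) // lerDl.
Qed.

Lemma vv_ge0 k : 0 <= vv k.
Proof.
case: k => [|k] //=; apply: exprn_ge0; apply: le_trans K_ge1; exact: ler01.
Qed.

Lemma vv_mono m n : (m <= n)%N -> vv m <= vv n.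
Proof.
move=> Hmn; case: m Hmn => [|m] Hmn; first exact: vv_ge0.
case: n Hmn => [//|n] Hmn /=.
by apply: ler_weXn2l; [exact: K_ge1 | exact: Hmn].
Qed.

Lemma vv_gap m n : (m < n)%N -> alpha * vv m < vv n.
Proof.
case: n => [//|n] Hmn.
apply: (le_lt_trans (y := alpha * vv n)).
  by apply: ler_wpM2l; [exact: ltW a_gt0 | exact: vv_mono].
case: n {Hmn} => [|n] /=; first by rewrite mulr0 ltr01.
rewrite exprS ltr_pM2r.
  by rewrite ltr_pMl ?a_gt0 // ltr1n.
by apply: exprn_gt0; apply: lt_le_trans K_ge1; exact: ltr01.
Qed.

End Real.

Theorem corollary1 (R : realType) (alpha : R) :
  1 <= alpha ->
  exists (M : finType) (c : 'I_3 -> {set M} -> R),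
    [/\ valid_costs c,
        (exists X : 'I_3 -> {set M}, is_partition X /\ is_MMS c X) &
        ~ (exists X : 'I_3 -> {set M}, is_partition X /\ alpha_EFX alpha c X)].
Proof.
move=> ha.
exists 'I_6, (fun i S => vv alpha (lev i S)).
split.
- move=> i; split.
  + by rewrite lev0.
  + move=> S; exact: (vv_ge0 ha).
  + move=> S e; apply: (vv_mono ha); exact: lev_mono.
- exists (fun k => if k == p0 then [set: 'I_6] else set0).
  split.
    split.
      move=> i j Hij.
      case: (eqVneq i p0) => Hi; case: (eqVneq j p0) => Hj.
      + by rewrite Hi Hj eqxx in Hij.
      + by rewrite -setI_eq0 ?setI0 ?set0I.
      + by rewrite -setI_eq0 ?setI0 ?set0I.
      + by rewrite -setI_eq0 ?setI0 ?set0I.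
    apply/setP => y; rewrite inE; apply/bigcupP; exists p0 => //.
  move=> i Y HY.
  case: (eqVneq i p0) => Hi.
    subst i; rewrite /= ?eqxx.
    have [g Hg] := part_g HY.
    have [k Hk] := mms_core g.
    apply: (le_trans _ (le_bigmax _ _ k)).
    by rewrite Hg; apply: (vv_mono ha).
  rewrite lev0 /=.
  apply: (le_trans _ (le_bigmax _ _ p0)).
  exact: (vv_ge0 ha).
- move=> [X [HX Hefx]].
  have [g Hg] := part_g HX.
  have [i [j [e /andP [Hei Hlt]]]] := bad_core g.
  have He : e \in X i by rewrite Hg inE.
  have := Hefx i j e He.
  rewrite !Hg.
  apply/negP; rewrite -ltNge.
  exact: (vv_gap ha).
Qed.
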